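(* Let $\gamma>0$, $\beta:\mathcal S\to(0,+\infty)$ of class $\mathcal C^1$, $\bar y\in(0,1]$ and $(x_0,y_0)\in\mathcal S$ with $0<y_0\le\bar y$. Let $u\in\mathcal U^{\bar y}_{x_0,y_0}$ satisfy $J(u)=\int_0^\infty u(t)\,dt<+\infty$, and let $(x(t),y(t))$ be the corresponding solution of the controlled CBF-SIR model with initial condition $(x_0,y_0)$. Then there exists a finite time $\bar t$ such that $R(x(\bar t),y(\bar t))<1$.
   Context: $\mathcal S=\{(x,y)\in\mathbb R^2_+: x+y\le1\}$; $R(x,y)=\frac1\gamma\beta(x,y)x$. $\mathcal U$ is the set of functions $u:[0,\infty)\to[0,1]$ continuous except on a set of points without accumulation points, at each of which $u$ has finite one-sided limits and equals its right limit. Controlled CBF-SIR model: $\dot x=-(1-u(t))\gamma R(x,y)y$, $\dot y=\gamma((1-u(t))R(x,y)-1)y$, with continuous piecewise-$\mathcal C^1$ solutions in $\mathcal S$ solving the ODE outside jump times of $u$. $\mathcal U^{\bar y}_{x_0,y_0}$ is the set of $u\in\mathcal U$ whose solution from $(x_0,y_0)$ satisfies $y(t)\le\bar y$ for all $t\ge0$. *)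

(* Defs.v *)
From Stdlib Require Import Reals Lra List.
From Coquelicot Require Import Coquelicot.
Open Scope R_scope.

Definition inS (x y : R) : Prop := 0 <= x /\ 0 <= y /\ x + y <= 1.

Definition Rrep (gamma : R) (beta : R -> R -> R) (x y : R) : R :=
  beta x y * x / gamma.

Definition open2 (U : R -> R -> Prop) : Prop :=
  forall x y, U x y -> exists eps, 0 < eps /\
    forall x' y', (x' - x)^2 + (y' - y)^2 < eps^2 -> U x' y'.

Definition C1_on_S (beta : R -> R -> R) : Prop :=
  exists U : R -> R -> Prop, open2 U /\ (forall x y, inS x y -> U x y) /\
    (forall x y, U x y ->
       ex_derive (fun t => beta t y) x /\ ex_derive (fun t => beta x t) y) /\
    (forall x y, U x y ->
       continuity_2d_pt (fun a b => Derive (fun t => beta t b) a) x y /\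
       continuity_2d_pt (fun a b => Derive (fun t => beta a t) b) x y).

(* a set of times in [0,oo) without accumulation points:
   only finitely many of its points in each [0,T] *)
Definition locally_finite (D : R -> Prop) : Prop :=
  forall T, exists l : list R, forall t, D t -> 0 <= t <= T -> In t l.

Definition admissible (u : R -> R) : Prop :=
  (forall t, 0 <= t -> 0 <= u t <= 1) /\
  exists D : R -> Prop, locally_finite D /\
    (forall t, 0 < t -> ~ D t -> continuous u t) /\
    (forall t, 0 <= t -> filterlim u (at_right t) (locally (u t))) /\
    (forall t, 0 < t -> exists l : R, filterlim u (at_left t) (locally l)).

Definition is_solution (gamma : R) (beta : R -> R -> R) (u : R -> R)
    (x0 y0 : R) (x y : R -> R) : Prop :=
  x 0 = x0 /\ y 0 = y0 /\
  (forall t, 0 < t -> continuous x t /\ continuous y t) /\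
  filterlim x (at_right 0) (locally (x 0)) /\
  filterlim y (at_right 0) (locally (y 0)) /\
  (forall t, 0 <= t -> inS (x t) (y t)) /\
  exists E : R -> Prop, locally_finite E /\
    forall t, 0 < t -> ~ E t ->
      is_derive x t (- (1 - u t) * gamma * Rrep gamma beta (x t) (y t) * y t) /\
      is_derive y t (gamma * ((1 - u t) * Rrep gamma beta (x t) (y t) - 1) * y t).

Definition admissible_ybar (gamma : R) (beta : R -> R -> R) (ybar x0 y0 : R)
    (u : R -> R) (x y : R -> R) : Prop :=
  admissible u /\ is_solution gamma beta u x0 y0 x y /\
  (forall t, 0 <= t -> y t <= ybar).

Definition J_finite (u : R -> R) : Prop :=
  ex_RInt_gen u (at_point 0) (Rbar_locally p_infty).

(* Main.v *)
Require Import Defs.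
From Stdlib Require Import Reals Lra Lia List Classical.
From Coquelicot Require Import Coquelicot.
Open Scope R_scope.

Lemma mvt_nonneg (f df : R -> R) a b : a < b ->
  (forall t, a <= t <= b -> continuity_pt f t) ->
  (forall t, a < t < b -> is_derive f t (df t) /\ 0 <= df t) -> f a <= f b.
Proof.
  intros Hab Hc Hd.
  assert (pr1 : forall c, a < c < b -> derivable_pt f c).
  { intros c Hc'. exists (df c). apply is_derive_Reals. apply (Hd c Hc'). }
  destruct (MVT f id a b pr1 (fun c _ => derivable_pt_id c) Hab Hc
     (fun c _ => derivable_continuous_pt _ _ (derivable_pt_id c))) as [c [P HP]].
  rewrite derive_pt_id in HP.
  assert (E : derive_pt f c (pr1 c P) = df c).
  { apply derive_pt_eq_0. apply is_derive_Reals. apply (Hd c P). }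
  rewrite E in HP. unfold id in HP. destruct (Hd c P) as [_ H0]. nra.
Qed.

Lemma mono_aux (f df : R -> R) (n : nat) : forall (l : list R) a b,
  (length l <= n)%nat -> a <= b ->
  (forall t, a <= t <= b -> continuity_pt f t) ->
  (forall t, a < t < b -> ~ In t l -> is_derive f t (df t) /\ 0 <= df t) ->
  f a <= f b.
Proof.
  induction n as [|n IH]; intros l a b Hn Hab Hc Hd;
  (destruct (Req_dec a b) as [->|Hne]; [lra|]).
  - destruct l; [|simpl in Hn; lia].
    apply (mvt_nonneg f df); [lra|exact Hc|]. intros t Ht. apply Hd; auto.
  - destruct (classic (exists p, In p l /\ a < p < b)) as [[p [Hp Hpab]]|Hno].
    + assert (Hlen := remove_length_lt Req_EM_T l p Hp).
      apply Rle_trans with (f p).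
      * apply (IH (remove Req_EM_T p l)); try lia; try lra.
        -- intros t Ht; apply Hc; lra.
        -- intros t Ht Hin. apply Hd; [lra|]. intro Hl. apply Hin.
           apply in_in_remove; [lra|exact Hl].
      * apply (IH (remove Req_EM_T p l)); try lia; try lra.
        -- intros t Ht; apply Hc; lra.
        -- intros t Ht Hin. apply Hd; [lra|]. intro Hl. apply Hin.
           apply in_in_remove; [lra|exact Hl].
    + apply (mvt_nonneg f df); [lra|exact Hc|]. intros t Ht. apply Hd; auto.
      intro Hl. apply Hno. exists t; auto.
Qed.

Lemma mono (f df : R -> R) (l : list R) a b : a <= b ->
  (forall t, a <= t <= b -> continuity_pt f t) ->
  (forall t, a < t < b -> ~ In t l -> is_derive f t (df t) /\ 0 <= df t) ->
  f a <= f b.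
Proof. intros; eapply (mono_aux f df (length l) l); eauto. Qed.

Theorem lemma7 (gamma : R) (beta : R -> R -> R) (ybar x0 y0 : R)
  (u x y : R -> R) :
  0 < gamma ->
  (forall a b, inS a b -> 0 < beta a b) ->
  C1_on_S beta ->
  0 < ybar <= 1 ->
  inS x0 y0 -> 0 < y0 <= ybar ->
  admissible_ybar gamma beta ybar x0 y0 u x y ->
  J_finite u ->
  exists tbar, 0 <= tbar /\ Rrep gamma beta (x tbar) (y tbar) < 1.
Proof.
  intros Hg Hb _ Hyb HS0 Hy0 [[Hu01 [D [HDf [HDc _]]]] [[Hx0 [Hy0' [Hcont [_ [Hyr [HS [E [HEf Hder]]]]]]]] _]] [l HJ].
  apply NNPP; intro Hno.
  assert (HR : forall t, 0 <= t -> 1 <= Rrep gamma beta (x t) (y t)).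
  { intros t Ht. apply Rnot_lt_le. intro H. apply Hno. exists t; auto. }
  clear Hno.
  assert (HJ1 : exists M, forall s, M < s -> exists v, is_RInt u 0 s v /\ v < l + 1).
  { specialize (HJ (fun v => Rabs (v - l) < 1)).
    destruct HJ as [Q Rr HQ HRr HP].
    { exists (mkposreal 1 Rlt_0_1). intros v Hv. exact Hv. }
    destruct HRr as [M HM]. exists M. intros s Hs.
    destruct (HP 0 s HQ (HM s Hs)) as [v [Hv1 Hv2]]. exists v. split; [exact Hv1|].
    apply Rabs_def2 in Hv2. lra. }
  destruct HJ1 as [M HM].
  assert (Hex : forall s, 0 <= s -> ex_RInt u 0 s).
  { intros s Hs. destruct (HM (Rmax M s + 1)) as [v [Hv _]].
    { generalize (Rmax_l M s); lra. }
    apply (@ex_RInt_Chasles_1 R_CompleteNormedModule) with (Rmax M s + 1).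
    { generalize (Rmax_r M s); lra. } exists v; exact Hv. }
  set (I := fun t => RInt u 0 t).
  assert (HI0 : forall t, 0 <= t -> 0 <= I t).
  { intros t Ht. apply RInt_ge_0; auto. intros z Hz. apply Hu01. lra. }
  set (L := l + 1).
  assert (HIL : forall t, 0 <= t -> I t <= L).
  { intros t Ht. destruct (HM (Rmax M t + 1)) as [v [Hv Hvl]].
    { generalize (Rmax_l M t); lra. }
    assert (HtS : t <= Rmax M t + 1) by (generalize (Rmax_r M t); lra).
    assert (Ex2 : ex_RInt u t (Rmax M t + 1)).
    { apply (@ex_RInt_Chasles_2 R_CompleteNormedModule) with 0. lra. exists v; exact Hv. }
    assert (Hc := RInt_Chasles u 0 t (Rmax M t + 1) (Hex t Ht) Ex2).
    rewrite (is_RInt_unique _ _ _ _ Hv) in Hc.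
    assert (0 <= RInt u t (Rmax M t + 1)).
    { apply RInt_ge_0; auto. intros z Hz. apply Hu01. lra. }
    unfold I, L. change plus with Rplus in Hc. lra. }
  assert (Hloc : forall t, 0 < t -> locally t (fun b => is_RInt u 0 b (I b))).
  { intros t Ht. exists (mkposreal t Ht). intros b Hb'.
    apply (@RInt_correct R_CompleteNormedModule). apply Hex.
    change (Rabs (b - t) < t) in Hb'. apply Rabs_def2 in Hb'. lra. }
  assert (HIc : forall t, 0 < t -> continuous I t).
  { intros t Ht. apply (continuous_RInt_1 u 0 t I). apply Hloc; auto. }
  assert (HId : forall t, 0 < t -> ~ D t -> is_derive I t (u t)).
  { intros t Ht HD. apply is_derive_RInt with 0. apply Hloc; auto. apply HDc; auto. }
  assert (Hdel : exists d, 0 < d /\ y0/2 < y d).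
  { assert (Hp : 0 < y0/2) by lra.
    apply (proj1 (filterlim_locally _ _)) with (eps := mkposreal _ Hp) in Hyr.
    destruct Hyr as [e He]. exists (e/2). split. destruct e; simpl; lra.
    assert (H1 : ball 0 e (e/2)).
    { change (Rabs (e/2 - 0) < e). destruct e as [e ep]; simpl.
      rewrite Rabs_right; lra. }
    assert (H2 : 0 < e/2) by (destruct e; simpl; lra).
    specialize (He (e/2) H1 H2). change (Rabs (y (e/2) - y 0) < y0/2) in He.
    apply Rabs_def2 in He. lra. }
  destruct Hdel as [d [Hd Hyd]].
  assert (Hlist : forall T, exists lst : list R, forall t, 0 <= t <= T -> ~ In t lst -> ~ D t /\ ~ E t).
  { intros T. destruct (HDf T) as [l1 H1]. destruct (HEf T) as [l2 H2].
    exists (l1 ++ l2). intros t Ht Hn. split; intro H; apply Hn; apply in_or_app; auto. }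
  set (c := y0/2 * exp (-(gamma*L))).
  assert (Hc0 : 0 < c) by (unfold c; generalize (exp_pos (-(gamma*L))); nra).
  assert (Hyc : forall t, d <= t -> c <= y t).
  { intros t Hdt. destruct (Hlist t) as [lst Hl].
    set (F := fun s => y s * exp (gamma * I s)).
    set (dF := fun s => gamma * ((1 - u s) * Rrep gamma beta (x s) (y s) - 1) * y s * exp(gamma * I s) + y s * (gamma * u s * exp (gamma * I s))).
    assert (HF : F d <= F t).
    { apply (mono F dF lst); auto.
      - intros s Hs. apply continuity_pt_filterlim.
        apply (continuous_mult y (fun s => exp (gamma * I s))).
        + apply Hcont; lra.
        + apply continuous_exp_comp.
          apply (continuous_mult (fun _ => gamma) I). apply continuous_const.
          apply HIc; lra.
      - intros s Hs Hn. destruct (Hl s ltac:(lra) Hn) as [HnD HnE].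
        destruct (Hder s ltac:(lra) HnE) as [_ Hdy].
        assert (HdI := HId s ltac:(lra) HnD).
        split.
        + assert (He : is_derive (fun s => exp (gamma * I s)) s (gamma * u s * exp (gamma * I s))).
          { assert (Hg1 : is_derive (fun s => gamma * I s) s (gamma * u s)).
            { apply (is_derive_scal I s gamma (u s)) in HdI. exact HdI. }
            assert (H := is_derive_comp exp (fun s => gamma * I s) s _ _ (is_derive_exp _) Hg1).
            exact H. }
          assert (H := is_derive_mult y _ s _ _ Hdy He ltac:(intros; apply Rmult_comm)).
          unfold F, dF. exact H.
        + assert (Hu := Hu01 s ltac:(lra)). assert (HRs := HR s ltac:(lra)).
          assert (Hys : 0 <= y s) by (apply (HS s ltac:(lra))).
          assert (Hep := exp_pos (gamma * I s)).
          unfold dF.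
          replace (gamma * ((1 - u s) * Rrep gamma beta (x s) (y s) - 1) * y s * exp (gamma * I s) + y s * (gamma * u s * exp (gamma * I s)))
            with ((gamma * exp (gamma * I s) * y s) * ((1 - u s) * (Rrep gamma beta (x s) (y s) - 1))) by ring.
          apply Rmult_le_pos; [|apply Rmult_le_pos; lra].
          apply Rmult_le_pos; [|lra]. apply Rmult_le_pos; lra. }
    unfold F in HF.
    assert (E1 : 1 <= exp (gamma * I d)).
    { rewrite <- exp_0. destruct (Rle_lt_or_eq_dec 0 (gamma * I d)) as [h|h].
      { apply Rmult_le_pos; [lra|apply HI0; lra]. }
      left; apply exp_increasing; exact h. rewrite <- h; lra. }
    assert (E2 : exp (-(gamma*L)) <= exp (-(gamma * I t))).
    { assert (gamma * I t <= gamma * L) by (apply Rmult_le_compat_l; [lra|apply HIL; lra]).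
      destruct (Rle_lt_or_eq_dec _ _ H) as [h|h].
      left; apply exp_increasing; lra. rewrite h; lra. }
    assert (E3 : y t = y t * exp (gamma * I t) * exp (-(gamma * I t))).
    { rewrite Rmult_assoc, <- exp_plus. replace (gamma * I t + - (gamma * I t)) with 0 by ring.
      rewrite exp_0; ring. }
    assert (Hyd0 : 0 <= y d) by lra.
    assert (y0/2 <= y t * exp (gamma * I t)) by nra.
    rewrite E3. unfold c. apply Rmult_le_compat; try lra.
    generalize (exp_pos (-(gamma*L))); lra. }
  assert (HL0 : 0 <= L) by (apply Rle_trans with (I d); [apply HI0|apply HIL]; lra).
  set (B := d + L + 1/(gamma*c) + 1).
  assert (Hgc : 0 < gamma * c) by nra.
  assert (HdB : d <= B).
  { unfold B. assert (0 < 1/(gamma*c)) by (apply Rdiv_lt_0_compat; lra). lra. }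
  destruct (Hlist B) as [lst Hl].
  set (G := fun s => - (x s + gamma * c * (s - I s))).
  set (dG := fun s => (1 - u s) * gamma * Rrep gamma beta (x s) (y s) * y s - gamma * c * (1 - u s)).
  assert (HG : G d <= G B).
  { apply (mono G dG lst); auto.
    - intros s Hs. apply continuity_pt_filterlim.
      assert (Hc1 : continuous (fun s => x s + gamma * c * (s - I s)) s).
      { apply (continuous_plus x (fun s => gamma * c * (s - I s))).
        apply Hcont; lra.
        apply (continuous_mult (fun _ => gamma * c) (fun s => s - I s)).
        apply continuous_const.
        apply (continuous_minus (fun s => s) I). apply continuous_id. apply HIc; lra. }
      apply (continuous_opp (fun s => x s + gamma * c * (s - I s))). exact Hc1.
    - intros s Hs Hn. destruct (Hl s ltac:(lra) Hn) as [HnD HnE].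
      destruct (Hder s ltac:(lra) HnE) as [Hdx _].
      assert (HdI := HId s ltac:(lra) HnD).
      split.
      + assert (H1 : is_derive (fun s => s - I s) s (1 - u s)).
        { apply (is_derive_minus (fun s => s) I s 1 (u s)). exact (@is_derive_id R_AbsRing s). exact HdI. }
        apply (is_derive_scal _ s (gamma * c)) in H1.
        assert (H2 := is_derive_plus x _ s _ _ Hdx H1).
        assert (H3 := is_derive_opp _ s _ H2).
        unfold G, dG. 
        replace ((1 - u s) * gamma * Rrep gamma beta (x s) (y s) * y s - gamma * c * (1 - u s))
          with (opp (plus (- (1 - u s) * gamma * Rrep gamma beta (x s) (y s) * y s) (scal (gamma * c) (1 - u s)))).
        exact H3.
        unfold opp, plus, scal; simpl. unfold mult; simpl. ring.
      + assert (Hu := Hu01 s ltac:(lra)). assert (HRs := HR s ltac:(lra)).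
        assert (Hys : c <= y s) by (apply Hyc; lra).
        unfold dG.
        replace ((1 - u s) * gamma * Rrep gamma beta (x s) (y s) * y s - gamma * c * (1 - u s))
          with ((gamma * (1 - u s)) * (Rrep gamma beta (x s) (y s) * y s - c)) by ring.
        apply Rmult_le_pos. apply Rmult_le_pos; lra. nra. }
  unfold G in HG.
  assert (HxB := proj1 (HS B ltac:(lra))).
  assert (Hxd := HS d ltac:(lra)). destruct Hxd as [_ [Hyd' Hxyd]].
  assert (HIB := HIL B ltac:(lra)). assert (HId0 := HI0 d ltac:(lra)).
  assert (Hk : gamma * c * (1/(gamma*c)) = 1) by (field; lra).
  assert (Hm : gamma * c * (B - I B) >= gamma * c * (d + 1/(gamma*c) + 1)).
  { apply Rle_ge, Rmult_le_compat_l; [lra|]. assert (B - L = d + 1/(gamma*c) + 1) by (unfold B; ring). lra. }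
  assert (gamma * c * (d - I d) <= gamma * c * d) by nra.
  nra.
Qed.
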